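(* Let $X$ be a compact Hausdorff space, $A=C(X)$, and $H_A=l_2(A)$. Let $F\in H''_A$ and let $(F_1,F_2,\dots)\in H'_A$ be the sequence representing $F$, i.e. $F_i=F(\hat e_i)^*$. Let $\Phi:X\to[0,\infty)$ be the point-wise limit $\Phi(x)=\sum_{i=1}^\infty \overline{F_i(x)}F_i(x)$, and let $E\subseteq X$ be the set of points at which $\Phi$ is continuous. Then for every $x_0\in E$ and every $f=(f_1,f_2,\dots)\in H'_A$, the series $\sum_{i=1}^\infty \overline{F_i(x_0)}f_i(x_0)$ converges and its sum equals $F(f)(x_0)$, the value at $x_0$ of the continuous function $F(f)\in C(X)$.
   Context: $H_A=l_2(A)$ is the set of sequences $(a_1,a_2,\dots)$ in $A$ with $\sum_i a_i^*a_i$ norm convergent; it is a right Hilbert $A$-module with componentwise action and inner product $\langle a,b\rangle=\sum_i a_i^*b_i$. Its standard basis vectors are $e_i$ ($1$ in place $i$, $0$ elsewhere). The dual $H'_A$ is the set of bounded $A$-linear maps $H_A\to A$; for $A=C(X)$ it is identified (via $f\mapsto (f(e_i)^* )_i$, so that $f(x)=\sum_i f_i^*x_i$) with the set of sequences $(f_1,f_2,\dots)$, $f_i\in C(X)$, with $\sup_N\|\sum_{i=1}^N \overline{f_i}f_i\|<\infty$ (sup norm), the norm being $\|f\|^2=\sup_N\|\sum_{i=1}^N\overline{f_i}f_i\|$, and the right $A$-module structure being componentwise multiplication. The second dual $H''_A$ is the set of bounded $A$-linear maps $H'_A\to A$. For $i\ge1$, $\hat e_i\in H'_A$ denotes the sequence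 with $1$ in place $i$ and $0$ elsewhere (the image of $e_i$ under $m\mapsto\hat m$, $\hat m(x)=\langle m,x\rangle$). Each $F\in H''_A$ is represented by the sequence $(F_i)$, $F_i=F(\hat e_i)^*$; this is the canonical isometric embedding $H''_A\subseteq H'_A$. *)

(* Defs.v *)
From HB Require Import structures.
From mathcomp Require Import all_boot all_order all_algebra.
From mathcomp Require Import all_classical all_reals all_analysis.
From mathcomp Require Import complex.
Set Implicit Arguments. Unset Strict Implicit. Unset Printing Implicit Defensive.
Import Order.TTheory GRing.Theory Num.Theory.
Import numFieldNormedType.Exports.
Local Open Scope classical_set_scope.
Local Open Scope ring_scope.
Local Open Scope complex_scope.

HB.instance Definition _ (R : realType) := PseudoPointedMetric.copy R[i] (R[i])^o.
HB.instance Definition _ (R : realType) := GRing.ComAlgebra.copy R[i] (R[i])^o.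
HB.instance Definition _ (R : realType) := NormedModule.copy R[i] (R[i])^o.

Definition inCX (R : realType) (X : topologicalType) (a : X -> R[i]) : Prop :=
  continuous a.

Definition sqsum (R : realType) (X : Type) (f : nat -> X -> R[i]) (N : nat) (x : X)
  : R[i] := \sum_(i < N) ((f i x)^* * f i x).

Definition normsq_le (R : realType) (X : Type) (f : nat -> X -> R[i]) (M : R) : Prop :=
  forall (N : nat) (x : X), `|sqsum f N x| <= M%:C.

Definition in_dual (R : realType) (X : topologicalType) (f : nat -> X -> R[i]) : Prop :=
  (forall i, inCX (f i)) /\ exists M : R, normsq_le f M.

Definition dscale (R : realType) (X : Type) (f : nat -> X -> R[i]) (a : X -> R[i])
  : nat -> X -> R[i] := fun i x => f i x * a x.
Definition dadd (R : realType) (X : Type) (f g : nat -> X -> R[i])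
  : nat -> X -> R[i] := fun i x => f i x + g i x.

Definition in_bidual (R : realType) (X : topologicalType)
  (F : (nat -> X -> R[i]) -> X -> R[i]) : Prop :=
  [/\ (forall f, in_dual f -> inCX (F f)),
      (forall f g, in_dual f -> in_dual g -> F (dadd f g) = (fun x => F f x + F g x)),
      (forall f a, in_dual f -> inCX a -> F (dscale f a) = (fun x => F f x * a x)) &
      (exists K : R, 0 <= K /\ forall f M, in_dual f -> 0 <= M -> normsq_le f M ->
          forall x, `|F f x| ^+ 2 <= (K ^+ 2 * M)%:C)].

Definition hat_e (R : realType) (X : Type) (i : nat) : nat -> X -> R[i] :=
  fun j _ => if j == i then 1 else 0.

Definition repr_seq (R : realType) (X : Type) (F : (nat -> X -> R[i]) -> X -> R[i])
  : nat -> X -> R[i] := fun i x => (F (@hat_e R X i) x)^*.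

Definition Phi (R : realType) (X : Type) (F : (nat -> X -> R[i]) -> X -> R[i])
  (x : X) : R[i] :=
  limn (fun N => sqsum (repr_seq F) N x).

(* Main.v *)
Require Import Defs.
From HB Require Import structures.
From mathcomp Require Import all_boot all_order all_algebra.
From mathcomp Require Import all_classical all_reals all_analysis.
From mathcomp Require Import complex.
From mathcomp.algebra_tactics Require Import ring lra.
Import Order.TTheory GRing.Theory Num.Theory.
Import numFieldNormedType.Exports.
Local Open Scope classical_set_scope.
Local Open Scope ring_scope.
Local Open Scope complex_scope.
Set Implicit Arguments. Unset Strict Implicit. Unset Printing Implicit Defensive.
Section Aux.
Variable R : realType.
Local Notation C := (R[i]).
Local Notation nc := (@Normc.normc R).

Lemma nc_ge0 (z : C) : 0 <= nc z.
Proof. by rewrite -ler0c; exact: (normr_ge0 z). Qed.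

Lemma nc_real (r : R) : nc r%:C = `|r|.
Proof. by rewrite /Normc.normc /= expr0n /= addr0 sqrtr_sqr. Qed.

Lemma conjNE (z : C) : Num.conj z = conjc z.
Proof. by []. Qed.

Lemma nc1 : nc 1 = 1.
Proof. by have := nc_real 1; rewrite normr1. Qed.

Lemma nc0 : nc 0 = 0.
Proof. by have := nc_real 0; rewrite normr0. Qed.

Lemma norm_real (r : R) : `|r%:C| = (`|r|)%:C.
Proof. by rewrite -nc_real. Qed.

Lemma conj_mul_nc (z : C) : z^* * z = (nc z ^+ 2)%:C.
Proof. by rewrite rmorphXn /= -[(nc z)%:C]/(`|z|) sqr_normc mulrC. Qed.

Lemma nc_conj (z : C) : nc (z^*) = nc z.
Proof. have := normcJ z. by case. Qed.

Lemma nc_mul (z w : C) : nc (z * w) = nc z * nc w.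
Proof. exact: Normc.normcM. Qed.

Lemma nc_add (z w : C) : nc (z + w) <= nc z + nc w.
Proof. exact: le_normcD. Qed.

Lemma nc_sub (z w : C) : nc (z - w) = nc (w - z).
Proof. by rewrite -normcN opprB. Qed.

Lemma nc_sum (I : Type) (s : seq I) (c : I -> C) :
  nc (\sum_(i <- s) c i) <= \sum_(i <- s) nc (c i).
Proof.
elim: s => [|a s IH]; first by rewrite !big_nil Normc.normc0.
rewrite !big_cons; apply: le_trans (nc_add _ _) _; exact: lerD.
Qed.

Lemma conj_continuous : continuous (fun z : C => z^*).
Proof.
move=> z; apply/(@cvgrPdist_lt _ _ _ _ (nbhs_filter z)) => e e0.
apply: filterS (nbhsx_ballx z e e0) => w /=.
by rewrite -rmorphB /= normcJ.
Qed.

Lemma rc_continuous : continuous (fun r : R => r%:C).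
Proof.
move=> r; apply/(@cvgrPdist_lt _ _ _ _ (nbhs_filter r)) => -[a b].
rewrite ltcE /= => /andP[/eqP b0 a0]; rewrite b0.
apply: filterS (nbhsx_ballx r a a0) => s /=.
by rewrite -rmorphB /= norm_real ltcR.
Qed.

Lemma aux_sq (s K : R) : 0 <= K -> 0 <= s -> s ^+ 2 <= K ^+ 2 * (s + 1) -> s <= K ^+ 2 + 1.
Proof. move=> *. nra. Qed.

End Aux.
Section Num.
Variable R : realType.
Local Notation C := (R[i]).
Local Notation nc := (@Normc.normc R).

Lemma am_gm (t x y : R) : 0 < t -> x * y <= (t * x ^+ 2 + y ^+ 2 / t) / 2.
Proof.
move=> t0; set u := y ^+ 2 / t.
have hu : t * u = y ^+ 2 by rewrite /u mulrC divfK // gt_eqF.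
have h := sqr_ge0 (t * x - y).
nra.
Qed.

Lemma cross (a b : nat -> C) M N (t : R) : 0 < t ->
  nc (\sum_(M <= i < N) a i * b i) <=
  (t * \sum_(M <= i < N) nc (a i) ^+ 2 + (\sum_(M <= i < N) nc (b i) ^+ 2) / t) / 2.
Proof.
move=> t0; apply: le_trans (nc_sum _ _) _.
rewrite mulr_sumr mulr_suml -big_split mulr_suml /=.
apply: ler_sum => i _; rewrite nc_mul; exact: am_gm.
Qed.

Lemma num1 (e5 Mf A B : R) : 0 < e5 -> 0 <= Mf -> 0 <= A -> A <= e5 ^+ 2 / (Mf + 1) ->
  0 <= B -> B <= Mf -> ((Mf + 1) / e5 * A + B / ((Mf + 1) / e5)) / 2 <= e5.
Proof.
move=> e0 M0 A0 hA B0 hB.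
have M1 : 0 < Mf + 1 by rewrite ltr_wpDl.
have h1 : (Mf + 1) / e5 * A <= e5.
  have tp : 0 <= (Mf + 1) / e5 by rewrite divr_ge0 // ltW.
  apply: le_trans (ler_wpM2l tp hA) _.
  have -> : (Mf + 1) / e5 * (e5 ^+ 2 / (Mf + 1)) = e5.
    by field; rewrite ?gt_eqF.
  done.
have h2 : B / ((Mf + 1) / e5) <= e5.
  rewrite invf_div; apply: le_trans (_ : (Mf + 1) * (e5 / (Mf + 1)) <= e5).
    by apply: ler_wpM2r; [rewrite divr_ge0 // ltW | lra].
  have -> : (Mf + 1) * (e5 / (Mf + 1)) = e5 by field; rewrite gt_eqF.
  done.
lra.
Qed.

Lemma lin1 (a s eta b : R) : a <= s -> s - eta < b -> a - b <= eta.
Proof. move=> *; lra. Qed.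

Lemma lin2 (A p s p0 s0 d : R) : A <= p - s -> `|p0 - p| < d -> `|s0 - s| < d ->
  p0 - s0 < d -> A <= 3 * d.
Proof.
move=> h1 /ltr_normlP [h2 h3] /ltr_normlP [h4 h5] h6; lra.
Qed.

Lemma lin3 (a a0 d : R) : `|a0 - a| < d -> a0 - d < a.
Proof. move=> /ltr_normlP [h2 h3]; lra. Qed.

Lemma sq_le (x y : R) : 0 <= x -> 0 <= y -> x ^+ 2 <= y ^+ 2 -> x <= y.
Proof. move=> *; nra. Qed.

Lemma num2 (K e5 : R) : K ^+ 2 * (e5 ^+ 2 / (K ^+ 2 + 1)) <= e5 ^+ 2.
Proof.
have K1 : 0 < K ^+ 2 + 1 by rewrite ltr_wpDl // sqr_ge0.
rewrite mulrA ler_pdivrMr //; have := sqr_ge0 e5; nra.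
Qed.

End Num.
Section Sq.
Variable R : realType.
Local Notation C := (R[i]).
Local Notation nc := (@Normc.normc R).

Definition sq (X : Type) (f : nat -> X -> C) (N : nat) (x : X) : R :=
  \sum_(i < N) nc (f i x) ^+ 2.

Definition vmask (X : Type) (P : nat -> bool) (f : nat -> X -> C) : nat -> X -> C :=
  fun i x => if P i then f i x else 0.

Variable X : Type.
Implicit Types f : nat -> X -> C.

Lemma sqsumE f N x : sqsum f N x = (sq f N x)%:C.
Proof.
rewrite /sqsum /sq rmorph_sum; apply: eq_bigr => i _; exact: conj_mul_nc.
Qed.

Lemma sq_ge0 f N x : 0 <= sq f N x.
Proof. by apply: sumr_ge0 => i _; rewrite exprn_ge0 // nc_ge0. Qed.

Lemma normsq_leE f M : normsq_le f M <-> (forall N x, sq f N x <= M).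
Proof.
rewrite /normsq_le; split => H N x; have := H N x;
  by rewrite sqsumE norm_real ger0_norm ?sq_ge0 // lecR.
Qed.

Lemma sum_split (V : zmodType) (c : nat -> V) (M N : nat) : (M <= N)%N ->
  \sum_(i < N) c i = \sum_(i < M) c i + \sum_(M <= i < N) c i.
Proof.
move=> hMN; rewrite -(big_mkord xpredT c) -(big_mkord xpredT c).
exact: big_cat_nat.
Qed.

Lemma sq_split f M N x : (M <= N)%N ->
  sq f N x = sq f M x + \sum_(M <= i < N) nc (f i x) ^+ 2.
Proof. exact: (sum_split (fun i => nc (f i x) ^+ 2)). Qed.

Lemma sq_mono f M N x : (M <= N)%N -> sq f M x <= sq f N x.
Proof.
move=> hMN; rewrite (sq_split f x hMN) lerDl; apply: sumr_ge0 => i _.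
by rewrite exprn_ge0 // nc_ge0.
Qed.

Lemma sq_mask_le P f N x : sq (vmask P f) N x <= sq f N x.
Proof.
apply: ler_sum => i _; rewrite /vmask; case: (P i) => //.
by rewrite nc0 expr0n /= exprn_ge0 // nc_ge0.
Qed.

Lemma sq_tail f N0 N' x :
  sq (vmask (fun i => ~~ (i < N0)%N) f) N' x <= sq f (maxn N' N0) x - sq f N0 x.
Proof.
set t := vmask _ f.
apply: le_trans (sq_mono t x (leq_maxl N' N0)) _.
rewrite (sq_split t x (leq_maxr N' N0)) (sq_split f x (leq_maxr N' N0)).
have -> : sq t N0 x = 0.
  by rewrite /sq big1 // => i _; rewrite /t /vmask ltn_ord [~~ true]/= nc0 expr0n.
rewrite add0r [sq f N0 x + _]addrC addrK.
rewrite le_eqVlt; apply/orP; left; apply/eqP; apply: eq_big_nat => i /andP[hi _].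
by rewrite /t /vmask -leqNgt hi.
Qed.

End Sq.

Section Dual.
Variable R : realType.
Local Notation C := (R[i]).
Local Notation nc := (@Normc.normc R).
Variable X : topologicalType.
Implicit Types f : nat -> X -> C.

Lemma in_dual_mask P f : in_dual f -> in_dual (vmask P f).
Proof.
move=> [hc [M hM]]; split.
  move=> i; rewrite /vmask; case: (P i); first exact: hc.
  exact: cst_continuous.
exists M; apply/normsq_leE => N x; apply: le_trans (sq_mask_le _ _ _ _) _.
by move/normsq_leE: hM; apply.
Qed.

Lemma sq_hat_e i N (x : X) : sq (@hat_e R X i) N x = (i < N)%N%:R.
Proof.
elim: N => [|N IH]; first by rewrite /sq big_ord0.
rewrite /sq big_ord_recr /= -/(sq _ _ _) IH /hat_e.
rewrite [in RHS]ltnS [in RHS]leq_eqVlt [in RHS]eq_sym.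
case: eqP => [->|_] /=; rewrite /Normc.normc /= ?ltnn expr0n /= ?expr1n addr0.
  by rewrite sqrtr1 expr1n add0r.
by rewrite sqrtr0 expr0n addr0.
Qed.

Lemma in_dual_hat_e i : in_dual (@hat_e R X i).
Proof.
split; first by move=> j; exact: cst_continuous.
exists 1; apply/normsq_leE => N x; rewrite sq_hat_e.
by case: (i < N)%N.
Qed.

End Dual.
Section Bump.
Variable R : realType.
Variable X : topologicalType.
Hypothesis hcompact : compact [set: X].
Hypothesis hhaus : hausdorff_space X.

Lemma bumpf (x : X) (V : set X) : nbhs x V ->
  exists b : X -> R, [/\ continuous b, b x = 1,
    (forall y, 0 <= b y <= 1) & (forall y, ~ V y -> b y = 0)].
Proof.
rewrite nbhsE => -[W [oW Wx] WV].
have clB : closed (~` W) by exact: open_closedC.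
have nBx : ~ (~` W) x by move=> /(_ Wx).
have sep := @normal_completely_regular R X (compact_normal hhaus hcompact)
  (hausdorff_accessible hhaus) x (~` W) clB nBx.
set u := @Urysohn X R [set x] (~` W).
have ux : u x = 0 by apply: (Urysohn_sub0 sep); exists x.
have uB : forall y, ~ W y -> u y = 1 by move=> y Wy; apply: (Urysohn_sub1 sep); exists y.
have ur : forall y, 0 <= u y <= 1.
  move=> y; have : [set` `[0, 1]] (u y) by apply: Urysohn_range; exists y.
  by rewrite /= in_itv.
exists (fun y => 1 - u y); split.
- move=> y; apply: cvgB; first exact: cvg_cst.
  exact: Urysohn_continuous.
- by rewrite ux subr0.
- move=> y; have /andP[u0 u1] := ur y.
  by rewrite subr_ge0 u1 /= lerBlDr lerDl u0.
- by move=> y nVy; rewrite uB ?subrr // => Wy; apply: nVy; exact: WV.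
Qed.

End Bump.
Section Bi.
Variable R : realType.
Local Notation C := (R[i]).
Local Notation nc := (@Normc.normc R).
Variable X : topologicalType.
Hypothesis hcompact : compact [set: X].
Hypothesis hhaus : hausdorff_space X.
Variable F : (nat -> X -> C) -> X -> C.
Hypothesis hF : in_bidual F.
Variable K : R.
Hypothesis K0 : 0 <= K.
Hypothesis hK : forall f M, in_dual f -> 0 <= M -> (forall N x, sq f N x <= M) ->
  forall x, nc (F f x) ^+ 2 <= K ^+ 2 * M.
Implicit Types f : nat -> X -> C.

Lemma F_add f g x : in_dual f -> in_dual g -> F (Defs.dadd f g) x = F f x + F g x.
Proof. by move=> hf hg; case: hF => _ hadd _ _; rewrite (hadd _ _ hf hg). Qed.

Lemma F_scale f a x : in_dual f -> inCX a -> F (Defs.dscale f a) x = F f x * a x.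
Proof. by move=> hf ha; case: hF => _ _ hsc _; rewrite (hsc _ _ hf ha). Qed.

Lemma F_cont f : in_dual f -> continuous (F f).
Proof. by move=> hf; case: hF => hc _ _ _; exact: hc. Qed.

Definition zv : nat -> X -> C := fun _ _ => 0.

Lemma in_dual_zv : in_dual zv.
Proof. exact: (in_dual_mask (fun=> false) (@in_dual_hat_e R X 0)). Qed.

Lemma F_zero x : F zv x = 0.
Proof.
have := F_add x in_dual_zv in_dual_zv.
have -> : Defs.dadd zv zv = zv by apply/funext => i; apply/funext => y; rewrite /Defs.dadd addr0.
move/(congr1 (fun z => z - F zv x)); rewrite subrr addrK => <-; done.
Qed.

Lemma F_head f N x : in_dual f ->
  F (vmask (fun i => (i < N)%N) f) x = \sum_(i < N) F (@hat_e R X i) x * f i x.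
Proof.
move=> hf; elim: N => [|N IH].
  by rewrite big_ord0 -(F_zero x); congr F.
have e : vmask (fun i => (i < N.+1)%N) f =
    Defs.dadd (vmask (fun i => (i < N)%N) f) (Defs.dscale (@hat_e R X N) (f N)).
  apply/funext => i; apply/funext => y; rewrite /vmask /Defs.dadd /Defs.dscale /hat_e ltnS leq_eqVlt.
  by case: eqP => [->|_] /=; rewrite ?ltnn ?mul1r ?add0r ?mul0r ?addr0.
have hd : in_dual (Defs.dscale (@hat_e R X N) (f N)).
  have -> : Defs.dscale (@hat_e R X N) (f N) = vmask (fun i => i == N) f.
    apply/funext => i; apply/funext => y; rewrite /vmask /Defs.dscale /hat_e.
    by case: eqP => [->|_]; rewrite ?mul1r ?mul0r.
  exact: in_dual_mask.
rewrite e F_add //; last exact: in_dual_mask.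
rewrite IH big_ord_recr /= F_scale //; first exact: in_dual_hat_e.
by case: hf.
Qed.

Lemma F_split f N x : in_dual f ->
  F f x = F (vmask (fun i => (i < N)%N) f) x + F (vmask (fun i => ~~ (i < N)%N) f) x.
Proof.
move=> hf; rewrite -F_add; try exact: in_dual_mask.
congr F; apply/funext => i; apply/funext => y; rewrite /vmask /Defs.dadd.
by case: (i < N)%N; rewrite ?addr0 ?add0r.
Qed.

Lemma contM (a b : X -> C) : continuous a -> continuous b -> continuous (fun y => a y * b y).
Proof. by move=> ha hb y; apply: cvgM; [exact: ha|exact: hb]. Qed.

Lemma contD (a b : X -> C) : continuous a -> continuous b -> continuous (fun y => a y + b y).
Proof. by move=> ha hb y; apply: cvgD; [exact: ha|exact: hb]. Qed.

Lemma cont_sum (c : nat -> X -> C) N : (forall i, continuous (c i)) ->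
  continuous (fun y => \sum_(i < N) c i y).
Proof.
move=> hc; elim: N => [|N IH].
  have -> : (fun y => \sum_(i < 0) c i y) = fun=> 0.
    by apply/funext => y; rewrite big_ord0.
  exact: cst_continuous.
have -> : (fun y => \sum_(i < N.+1) c i y) = fun y => \sum_(i < N) c i y + c N y.
  by apply/funext => y; rewrite big_ord_recr.
exact: (@contD (fun y => \sum_(i < N) c i y) (c N) IH (hc N)).
Qed.

Lemma cont_sq_C f N : (forall i, inCX (f i)) -> continuous (fun y => (sq f N y)%:C).
Proof.
move=> hc; have -> : (fun y => (sq f N y)%:C) = fun y => \sum_(i < N) ((f i y)^* * f i y).
  by apply/funext => y; rewrite -sqsumE.
apply: (@cont_sum (fun i y => (f i y)^* * f i y)) => i; apply: contM; last exact: hc.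
move=> y; apply: (@continuous_comp _ _ _ (f i) (fun z => z^*)); first exact: hc.
exact: conj_continuous.
Qed.

Lemma loc (h : nat -> X -> C) (x : X) (V : set X) (eta : R) :
  (forall i, inCX (h i)) -> nbhs x V -> 0 <= eta ->
  (forall y, V y -> forall N, sq h N y <= eta) ->
  exists a : X -> C, [/\ inCX a, a x = 1, in_dual (Defs.dscale h a) &
     nc (F (Defs.dscale h a) x) ^+ 2 <= K ^+ 2 * eta].
Proof.
move=> hc hV eta0 hb.
have [b [bc bx b01 bV]] := @bumpf R X hcompact hhaus x V hV.
pose a := fun y => (b y)%:C.
have ac : inCX a by move=> y; apply: (continuous_comp (bc y)); exact: rc_continuous.
have sqa : forall N y, sq (Defs.dscale h a) N y = b y ^+ 2 * sq h N y.
  move=> N y; rewrite /sq mulr_sumr; apply: eq_bigr => i _.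
  have /andP[b0 _] := b01 y.
  by rewrite /Defs.dscale nc_mul /a nc_real ger0_norm // exprMn mulrC.
have hbd : forall N y, sq (Defs.dscale h a) N y <= eta.
  move=> N y; rewrite sqa; have [Vy|nVy] := pselect (V y).
    have /andP[b0 b1] := b01 y.
    apply: le_trans (_ : 1 * eta <= eta); last by rewrite mul1r.
    apply: ler_pM; [exact: exprn_ge0|exact: sq_ge0|by rewrite expr_le1|exact: hb].
  by rewrite bV // expr0n /= mul0r.
have hd : in_dual (Defs.dscale h a).
  split; last by exists eta; exact/normsq_leE.
  by move=> i; rewrite /inCX /Defs.dscale; apply: contM; [exact: hc|exact: ac].
exists a; split => //; first by rewrite /a bx.
exact: hK hd eta0 hbd x.
Qed.

Lemma repr_cont i : inCX (repr_seq F i).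
Proof.
move=> y; apply: (@continuous_comp _ _ _ (F (@hat_e R X i)) (fun z => z^*)).
  exact: (F_cont (@in_dual_hat_e R X i)).
exact: conj_continuous.
Qed.

Lemma sq_head_le f N N' y : sq (vmask (fun i => (i < N)%N) f) N' y <= sq f N y.
Proof.
case: (leqP N' N) => hN.
  by apply: le_trans (sq_mask_le _ _ _ _) (sq_mono _ _ hN).
rewrite (sq_split _ _ (ltnW hN)) big_nat_cond big1 ?addr0; first exact: sq_mask_le.
move=> i /andP[/andP[hi _] _]; rewrite /vmask ltnNge hi [~~ true]/=.
by rewrite nc0 expr0n.
Qed.

Lemma S_bound N x : sq (repr_seq F) N x <= K ^+ 2 + 1.
Proof.
set s := sq (repr_seq F) N x.
pose h := vmask (fun i => (i < N)%N) (repr_seq F).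
have hc : forall i, inCX (h i).
  by move=> i; rewrite /h /vmask; case: (i < N)%N; [exact: repr_cont|exact: cst_continuous].
have hV : nbhs x [set y | sq (repr_seq F) N y < s + 1].
  have := @cont_sq_C (repr_seq F) N repr_cont x.
  move/(@cvgrPdist_lt _ _ _ _ (nbhs_filter x)) => /(_ 1%:C).
  rewrite ltcR ltr01 => /(_ isT); apply: filterS => y /=.
  rewrite -rmorphB /= norm_real ltcR => hy.
  have := ler_norm (sq (repr_seq F) N y - s); rewrite distrC.
  move: hy; rewrite /s; set t := sq _ N y; move=> hy hn.
  have : t - sq (repr_seq F) N x < 1 by apply: le_lt_trans (ler_norm _) _; rewrite distrC.
  by rewrite ltrBlDl addrC.
have [a [ac ax hd hb]] := loc hc hV (addr_ge0 (sq_ge0 _ _ _) ler01)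
  (fun y Vy N' => le_trans (sq_head_le _ _ _ _) (ltW Vy)).
have eF : F (Defs.dscale h a) x = s%:C.
  have -> : Defs.dscale h a = vmask (fun i => (i < N)%N) (Defs.dscale h a).
    apply/funext => i; apply/funext => y; rewrite /vmask /Defs.dscale /h /vmask.
    by case: (i < N)%N; rewrite ?mul0r.
  rewrite F_head // /s -sqsumE /sqsum.
  apply: eq_bigr => i _; rewrite /Defs.dscale /h /vmask ltn_ord ax mulr1.
  by rewrite /repr_seq conjNE conjcK.
move: hb; rewrite eF nc_real ger0_norm ?sq_ge0 // -/s => hb.
have := sq_ge0 (repr_seq F) N x; rewrite -/s => s0.
exact: (aux_sq K0 s0 hb).
Qed.
Definition Pf (x : X) : R := sup (range (fun N => sq (repr_seq F) N x)).

Lemma S_ub x : has_ubound (range (fun N => sq (repr_seq F) N x)).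
Proof. by exists (K ^+ 2 + 1) => r [N _ <-]; exact: S_bound. Qed.

Lemma S_le_P N x : sq (repr_seq F) N x <= Pf x.
Proof. by apply: ub_le_sup; [exact: S_ub | exists N]. Qed.

Lemma S_cvg x : (fun N => sq (repr_seq F) N x) @ \oo --> Pf x.
Proof.
apply: nondecreasing_cvgn; last exact: S_ub.
by move=> m n hmn; exact: sq_mono.
Qed.

Lemma Phi_eq x : Phi F x = (Pf x)%:C.
Proof.
rewrite /Phi.
have -> : (fun N => sqsum (repr_seq F) N x) = (fun r : R => r%:C) \o (fun N => sq (repr_seq F) N x).
  by apply/funext => N /=; rewrite sqsumE.
apply: cvg_lim => //; apply: cvg_comp; first exact: S_cvg.
exact: rc_continuous.
Qed.
Lemma normE (z : C) : `|z| = (nc z)%:C.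
Proof. by []. Qed.

Lemma main_est (x0 : X) (hx0 : {for x0, continuous (Phi F)}) f (hf : in_dual f) (e : R) :
  0 < e -> exists M, forall N, (M <= N)%N ->
  nc (\sum_(i < N) F (@hat_e R X i) x0 * f i x0 - F f x0) <= e.
Proof.
move=> e0.
have [fc [Mf hMf0]] := hf.
have hMf : forall N y, sq f N y <= Mf by apply/normsq_leE.
have Mf0 : 0 <= Mf by apply: le_trans (sq_ge0 f 0 x0) (hMf 0%N x0).
pose e5 := e / 5.
have e50 : 0 < e5 by rewrite divr_gt0.
pose del := e5 ^+ 2 / (Mf + 1) / 3.
have Mf1 : 0 < Mf + 1 by rewrite ltr_wpDl.
have del0 : 0 < del by rewrite !divr_gt0 // exprn_gt0.
pose eta := e5 ^+ 2 / (K ^+ 2 + 1).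
have eta0 : 0 < eta by rewrite divr_gt0 ?exprn_gt0 // ltr_wpDl // sqr_ge0.
have U1 : \forall y \near x0, `|Pf x0 - Pf y| < del.
  have := hx0; move/(@cvgrPdist_lt _ _ _ _ (nbhs_filter x0)) => /(_ del%:C).
  rewrite ltcR del0 => /(_ isT); apply: filterS => y.
  by rewrite !Phi_eq -rmorphB /= norm_real ltcR.
have [M hM] : exists M, Pf x0 - sq (repr_seq F) M x0 < del.
  have := @S_cvg x0; move/cvgrPdist_lt => /(_ del del0) [M _ hM].
  exists M; have := hM M (leqnn M); rewrite /= => h.
  by apply: le_lt_trans (ler_norm _) h.
have U2 : \forall y \near x0, `|sq (repr_seq F) M x0 - sq (repr_seq F) M y| < del.
  have := @cont_sq_C (repr_seq F) M repr_cont x0.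
  move/(@cvgrPdist_lt _ _ _ _ (nbhs_filter x0)) => /(_ del%:C).
  rewrite ltcR del0 => /(_ isT); apply: filterS => y.
  by rewrite -rmorphB /= norm_real ltcR.
have U3 : \forall y \near x0, nc (F f x0 - F f y) < e5.
  have := F_cont hf; move=> /(_ x0).
  move/(@cvgrPdist_lt _ _ _ _ (nbhs_filter x0)) => /(_ e5%:C).
  rewrite ltcR e50 => /(_ isT); apply: filterS => y.
  by rewrite normE ltcR.
pose H := fun y => \sum_(i < M) F (@hat_e R X i) y * f i y.
have U4 : \forall y \near x0, nc (H x0 - H y) < e5.
  have Hc : continuous H.
    apply: (@cont_sum (fun i y => F (@hat_e R X i) y * f i y)) => i.
    apply: contM; [exact: F_cont (in_dual_hat_e R X i) | exact: fc].
  have : H @ x0 --> H x0 by apply: Hc.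
  move/(@cvgrPdist_lt _ _ _ _ (nbhs_filter x0)) => /(_ e5%:C).
  rewrite ltcR e50 => /(_ isT); apply: filterS => y.
  by rewrite normE ltcR.
have hQ := filterI U1 (filterI U2 (filterI U3 U4)).
have : [set A | exists2 B, open_nbhs x0 B & B `<=` A] (fun y => `|Pf x0 - Pf y| < del /\
   (`|sq (repr_seq F) M x0 - sq (repr_seq F) M y| < del /\
   (nc (F f x0 - F f y) < e5 /\ nc (H x0 - H y) < e5))).
  by rewrite -nbhsE; exact: hQ.
case=> W [oW Wx0] WW0.
pose E := [set r | exists y N, W y /\ r = sq f N y].
have hE : has_sup E.
  split; first by exists (sq f 0%N x0), x0, 0%N.
  by exists Mf => r [y [N [_ ->]]]; exact: hMf.
have [r [y0 [N1 [Wy0 ->]]] hr] := sup_adherent eta0 hE.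
pose N0 := maxn N1 M.
have hN0 : sup E - eta < sq f N0 y0 := lt_le_trans hr (sq_mono f y0 (leq_maxl N1 M)).
pose d := sq f N0 y0 - (sup E - eta).
have d0 : 0 < d by rewrite subr_gt0.
have V0 : nbhs y0 (W `&` [set y | `|sq f N0 y0 - sq f N0 y| < d]).
  apply: filterI; first by apply: open_nbhs_nbhs; split.
  have := @cont_sq_C f N0 fc y0.
  move/(@cvgrPdist_lt _ _ _ _ (nbhs_filter y0)) => /(_ d%:C).
  rewrite ltcR d0 => /(_ isT); apply: filterS => y.
  by rewrite -rmorphB /= norm_real ltcR.
pose tl := vmask (fun i => ~~ (i < N0)%N) f.
have hV : forall y, (W `&` [set y | `|sq f N0 y0 - sq f N0 y| < d]) y ->
    forall N', sq tl N' y <= eta.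
  move=> y [Wy hy] N'; apply: le_trans (sq_tail f N0 N' y) _.
  apply: lin1.
    by apply: (sup_upper_bound hE); exists y, (maxn N' N0).
  have := lin3 hy; rewrite /d opprB addrC subrK; done.
have tlc : forall i, inCX (tl i).
  by move=> i; rewrite /tl /vmask; case: (~~ (i < N0)%N); [exact: fc|exact: cst_continuous].
have [a [ac ay0 hda hb]] := loc tlc V0 (ltW eta0) hV.
have hT : nc (F tl y0) <= e5.
  move: hb; rewrite F_scale //; last exact: in_dual_mask.
  rewrite ay0 mulr1 => hb.
  apply: sq_le; [exact: nc_ge0|exact: ltW|].
  exact: le_trans hb (num2 K e5).
have hMN0 : (M <= N0)%N by exact: leq_maxr.
have eFy0 : F f y0 = H y0 + \sum_(M <= i < N0) F (@hat_e R X i) y0 * f i y0 + F tl y0.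
  by rewrite (F_split N0 y0 hf) F_head // (sum_split (fun i => F (@hat_e R X i) y0 * f i y0) hMN0).
have cg : forall y N, (M <= N)%N -> \sum_(M <= i < N) nc (F (@hat_e R X i) y) ^+ 2 =
    sq (repr_seq F) N y - sq (repr_seq F) M y.
  move=> y N hMN; rewrite (sq_split _ _ hMN).
  have -> : forall u v : R, u + v - u = v by move=> u v; rewrite addrAC subrr add0r.
  by apply: eq_bigr => i _; rewrite /repr_seq nc_conj.
have cf : forall y N, (M <= N)%N -> \sum_(M <= i < N) nc (f i y) ^+ 2 <= Mf.
  move=> y N hMN; apply: le_trans (hMf N y); rewrite (sq_split _ _ hMN) lerDr.
  exact: sq_ge0.
have tp : 0 < (Mf + 1) / e5 by rewrite divr_gt0.
have d3 : 3 * del = e5 ^+ 2 / (Mf + 1) by rewrite /del mulrC divfK // pnatr_eq0.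
have [U1y [U2y [U3y U4y]]] := WW0 y0 Wy0.
have c2 : nc (\sum_(M <= i < N0) F (@hat_e R X i) y0 * f i y0) <= e5.
  apply: le_trans (cross _ _ _ _ tp) _; apply: num1 => //.
  - by apply: sumr_ge0 => i _; rewrite exprn_ge0 // nc_ge0.
  - rewrite cg // -d3; apply: lin2 U1y U2y hM.
    by rewrite lerD2r; exact: S_le_P.
  - by apply: sumr_ge0 => i _; rewrite exprn_ge0 // nc_ge0.
  - exact: cf.
have c1 : forall N, (M <= N)%N ->
    nc (\sum_(M <= i < N) F (@hat_e R X i) x0 * f i x0) <= e5.
  move=> N hMN; apply: le_trans (cross _ _ _ _ tp) _; apply: num1 => //.
  - by apply: sumr_ge0 => i _; rewrite exprn_ge0 // nc_ge0.
  - rewrite cg // -d3; apply: (@lin2 _ _ (Pf x0) (sq (repr_seq F) M x0)); last exact: hM.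
    + by rewrite lerD2r; exact: S_le_P.
    + by rewrite subrr normr0.
    + by rewrite subrr normr0.
  - by apply: sumr_ge0 => i _; rewrite exprn_ge0 // nc_ge0.
  - exact: cf.
exists M => N hMN.
rewrite (sum_split (fun i => F (@hat_e R X i) x0 * f i x0) hMN) -/(H x0).
set c1v := \sum_(M <= i < N) _.
set c2v := \sum_(M <= i < N0) _ in eFy0 c2.
have -> : H x0 + c1v - F f x0 =
    c1v + (H x0 - H y0) + - c2v + - F tl y0 + (F f y0 - F f x0).
  by rewrite eFy0; ring.
have e5e : e5 + e5 + e5 + e5 + e5 = e by rewrite /e5; field.
rewrite -e5e.
apply: le_trans (nc_add _ _) _; apply: lerD; last by rewrite nc_sub; exact: ltW.
apply: le_trans (nc_add _ _) _; apply: lerD; last by rewrite normcN.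
apply: le_trans (nc_add _ _) _; apply: lerD; last by rewrite normcN.
apply: le_trans (nc_add _ _) _; apply: lerD; first exact: c1.
exact: ltW.
Qed.

End Bi.
Unset Implicit Arguments.

Theorem lemma3p1 (R : realType) (X : topologicalType)
  (hcompact : compact [set: X]) (hhaus : hausdorff_space X)
  (F : (nat -> X -> R[i]) -> X -> R[i]) (hF : in_bidual F)
  (x0 : X) (hx0 : {for x0, continuous (Phi F)})
  (f : nat -> X -> R[i]) (hf : in_dual f) :
  (fun N => \sum_(i < N) ((repr_seq F i x0)^* * f i x0)) @ \oo --> F f x0.
Proof.
case: (hF) => _ _ _ [K [K0 hKb]].
have hK : forall g M, in_dual g -> 0 <= M -> (forall N x, sq g N x <= M) ->
    forall x, Normc.normc (F g x) ^+ 2 <= K ^+ 2 * M.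
  move=> g M hg M0 hgM x; have := hKb g M hg M0 (proj2 (normsq_leE g M) hgM) x.
  by rewrite (normE (F g x)) -rmorphXn lecR.
apply/(@cvgrPdist_le _ _ _ _ eventually_filter) => -[a b].
rewrite ltcE /= => /andP[/eqP b0 a0]; rewrite b0.
have [M hM] := main_est hcompact hhaus hF K0 hK hx0 hf a0.
exists M => // N hN /=.
rewrite (normE (_ - _)) -complexr0 lecR nc_sub.
under eq_bigr => i _ do rewrite /repr_seq conjNE conjcK.
exact: hM.
Qed.
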